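(* Under the direct FIFO mechanism, when all drivers use the equilibrium strategy of Theorem 1 (accept all dispatches, join iff the queue length is at most $\bar Q$, never leave or move to the tail): if $\lambda>\sum_{i\in\mathcal L}\mu_i$, the steady-state queue length is $Q^*=\bar Q$, this is the unique steady-state length, all trips are completed, and every arriving driver has payoff $0$; if $\lambda\le\sum_{i\in\mathcal L}\mu_i$, then $Q^*=n_{j^*}$ is a steady-state queue length (unique when $\lambda\ne\sum_{j=1}^i\mu_j$ for all $i\in\mathcal L$), all trips to locations $i<j^*$ and $\lambda-\sum_{i<j^*}\mu_i$ units per unit time of trips to $j^*$ are completed, and every arriving driver has payoff $w_{j^*}$.
   Context: Model: continuous time, non-atomic, stationary; one origin with a queue. Destinations $\mathcal L=\{1,\dots,\ell\}$, rider arrival rates $\mu_i>0$, driver arrival rate $\lambda>0$, net earnings $w_1>\dots>w_\ell\ge0$ (0 for not joining or leaving without a rider), driver waiting cost $c>0$ per unit time. Queue positions $q\in[0,Q]$, $q=0$ head. Notation: $j^*=\max\{i\in\mathcal L:\lambda>\sum_{j<i}\mu_j\}$; $n_1=0$, $n_i=\sum_{j<i}(w_j-w_i)\mu_j/c$; $\bar Q=\sum_i w_i\mu_i/c$. Direct FIFO: when the queue length $Q\ge n_i$, a trip to $i$ is offered first to the driver at position $n_i$ and after each decline to the next driver further down the queue; when $Q<n_i$ it is not dispatched. A steady-state queue length is one at which the rate of drivers joining equals the rate of drivers dispatched from the queue. *)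

(* Defs.v *)
From Stdlib Require Import Reals Lra.
From Coquelicot Require Import Coquelicot.
Open Scope R_scope.

(* Destinations are indexed 0..l-1 (paper's 1..ell shifted by one). *)

Fixpoint psum (n : nat) (f : nat -> R) : R :=
  match n with
  | O => 0
  | S k => psum k f + f k
  end.

Definition Smu (mu : nat -> R) (i : nat) : R := psum i mu.

Definition npos (c : R) (mu w : nat -> R) (i : nat) : R :=
  psum i (fun j => (w j - w i) * mu j) / c.

Definition Qbar (l : nat) (c : R) (mu w : nat -> R) : R :=
  psum l (fun i => w i * mu i) / c.

(* Fluid steady state of the direct FIFO mechanism when every driver uses the
   Theorem-1 strategy (accept every dispatch, join iff queue length <= Qbar,
   never leave / move to tail).
   Q : queue length, r : rate at which arriving drivers join,
   x i : rate at which trips to destination i are dispatched (and completed).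
   - a trip to i is offered to position n_i; if n_i < Q it is always accepted
     by the driver there (rate mu_i); if n_i > Q it is not dispatched; if
     n_i = Q the trip is offered at the tail, i.e. to the arriving drivers;
   - arrivals join at rate lam when Q < Qbar, not at all when Q > Qbar, and at
     the boundary Q = Qbar at any rate in [0, lam];
   - a tail trip is not left unserved while arriving drivers are turned away;
   - steady state: joining rate = total dispatch rate from the queue. *)
Definition steady_state (l : nat) (lam c : R) (mu w : nat -> R)
    (Q r : R) (x : nat -> R) : Prop :=
  0 <= Q /\
  0 <= r <= lam /\
  (Q < Qbar l c mu w -> r = lam) /\
  (Qbar l c mu w < Q -> r = 0) /\
  (forall i, (i < l)%nat ->
     (npos c mu w i < Q -> x i = mu i) /\
     (Q < npos c mu w i -> x i = 0) /\
     (npos c mu w i = Q -> 0 <= x i <= mu i /\ (x i < mu i -> r = lam))) /\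
  r = psum l x.

(* forward speed of a driver at position p: rate at which drivers ahead of
   p (positions < p) are dispatched *)
Definition speed (l : nat) (c : R) (mu w x : nat -> R) (p : R) : R :=
  psum l (fun j => if Rlt_dec (npos c mu w j) p then x j else 0).

Definition travel_time (l : nat) (c : R) (mu w x : nat -> R) (a Q : R) : R :=
  RInt (fun p => / speed l c mu w x p) a Q.

(* expected payoff of a driver joining the tail of a steady-state queue of
   length Q: in the FIFO fluid, the fraction x_i / r of joiners is eventually
   dispatched to i, after travelling from Q to n_i. *)
Definition joiner_payoff (l : nat) (c : R) (mu w : nat -> R)
    (Q r : R) (x : nat -> R) : R :=
  psum l (fun i => x i / r *
            (w i - c * travel_time l c mu w x (npos c mu w i) Q)).

(* Main.v *)
Require Import Defs.
From Stdlib Require Import Reals Lra Lia.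
From Coquelicot Require Import Coquelicot.
Open Scope R_scope.

Lemma psum_ext n f g : (forall j, (j < n)%nat -> f j = g j) -> psum n f = psum n g.
Proof. induction n; intros H; simpl; auto. rewrite IHn by (intros; apply H; lia). rewrite H by lia. auto. Qed.

Lemma psum_le n f g : (forall j, (j < n)%nat -> f j <= g j) -> psum n f <= psum n g.
Proof. induction n; intros H; simpl; [lra|]. assert (psum n f <= psum n g) by (apply IHn; intros; apply H; lia). specialize (H n ltac:(lia)). lra. Qed.

Lemma psum_zero n : psum n (fun _ => 0) = 0.
Proof. induction n; simpl; lra. Qed.

Lemma psum_pos n f : (0 < n)%nat -> (forall j, (j < n)%nat -> 0 < f j) -> 0 < psum n f.
Proof. induction n; intros Hn H; [lia|]. simpl. destruct n. simpl. specialize (H 0%nat ltac:(lia)). lra.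
  assert (0 < psum (S n) f) by (apply IHn; [lia| intros; apply H; lia]). specialize (H (S n) ltac:(lia)). lra. Qed.

Lemma psum_if n m g : (m <= n)%nat -> psum n (fun j => if (j <? m)%nat then g j else 0) = psum m g.
Proof. induction n; intros Hm.
  - replace m with 0%nat by lia. reflexivity.
  - destruct (Nat.eq_dec m (S n)) as [->|Hne].
    + simpl. rewrite (psum_ext n _ g). destruct (Nat.ltb_spec n (S n)); [reflexivity|lia].
      intros j Hj. destruct (Nat.ltb_spec j (S n)); [reflexivity|lia].
    + simpl. rewrite IHn by lia. destruct (Nat.ltb_spec n m); [lia|]. lra. Qed.

Lemma psum_mulr n f a : psum n (fun j => f j * a) = psum n f * a.
Proof. induction n; simpl; [ring|]. rewrite IHn. ring. Qed.

Lemma psum_lin n (W mu : nat -> R) t : psum n (fun j => (W j - t) * mu j) = psum n (fun j => W j * mu j) - t * psum n mu.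
Proof. induction n; simpl; [ring|]. rewrite IHn. ring. Qed.

Lemma npos_step c mu W k : c <> 0 ->
  npos c mu W (S k) - npos c mu W k = (W k - W (S k)) * Smu mu (S k) / c.
Proof. intros Hc. unfold npos, Smu. rewrite !psum_lin. simpl. field. auto. Qed.

Lemma rint_chain (f : R -> R) (N W Sv : nat -> R) (c : R) (m : nat) :
 c <> 0 ->
 (forall k, (k < m)%nat -> Sv k <> 0 /\ N k <= N (S k) /\
     N (S k) - N k = (W k - W (S k)) * Sv k / c /\
     (forall p, N k < p < N (S k) -> f p = / Sv k)) ->
 forall i, (i <= m)%nat -> is_RInt f (N i) (N m) ((W i - W m)/c).
Proof.
  intros Hc. induction m; intros H i Hi.
  - replace i with 0%nat by lia. replace ((W 0%nat - W 0%nat)/c) with 0 by (field; auto).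
    apply (@is_RInt_point R_NormedModule).
  - destruct (Nat.eq_dec i (S m)) as [->|Hne].
    + replace ((W (S m) - W (S m))/c) with 0 by (field; auto).
      apply (@is_RInt_point R_NormedModule).
    + destruct (H m ltac:(lia)) as (HS & Hle & Heq & Hf).
      replace ((W i - W (S m))/c) with (plus ((W i - W m)/c) ((W m - W (S m))/c)).
      2:{ unfold plus; simpl. field. auto. }
      apply (@is_RInt_Chasles R_NormedModule) with (N m).
      * apply IHm; [intros; apply H; lia| lia].
      * apply (@is_RInt_ext R_NormedModule) with (fun _ => / Sv m).
        { intros p Hp. rewrite Rmin_left, Rmax_right in Hp by lra. symmetry. apply Hf. auto. }
        replace ((W m - W (S m))/c) with (scal (N (S m) - N m) (/ Sv m)).
        apply (@is_RInt_const R_NormedModule).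
        unfold scal; simpl; unfold mult; simpl. rewrite Heq. field. auto.
Qed.

Lemma speed_const l c mu w x p m : (m <= l)%nat ->
  (forall j, (j < l)%nat -> (npos c mu w j < p <-> (j < m)%nat)) ->
  speed l c mu w x p = psum m x.
Proof.
  intros Hm H. unfold speed. rewrite <- (psum_if l m x Hm). apply psum_ext. intros j Hj.
  destruct (Rlt_dec (npos c mu w j) p) as [h|h]; destruct (Nat.ltb_spec j m); auto.
  - apply H in h; lia.
  - exfalso. apply h. apply H; auto.
Qed.

Lemma ss_bounds l lam c mu w Q r x : steady_state l lam c mu w Q r x ->
  (forall i, (i < l)%nat -> 0 < mu i) -> forall i, (i < l)%nat -> 0 <= x i <= mu i.
Proof.
  intros (_ & _ & _ & _ & H & _) Hmu i Hi. destruct (H i Hi) as (H1 & H2 & H3).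
  specialize (Hmu i Hi).
  destruct (Rtotal_order (npos c mu w i) Q) as [h|[h|h]].
  - rewrite H1; lra.
  - apply H3 in h. lra.
  - rewrite H2; lra.
Qed.

Theorem mainTheorem6 (l : nat) (lam c : R) (mu w : nat -> R) (js : nat) :
  (0 < l)%nat -> 0 < lam -> 0 < c ->
  (forall i, (i < l)%nat -> 0 < mu i) ->
  (forall i j, (i < j)%nat -> (j < l)%nat -> w j < w i) ->
  0 <= w (l - 1)%nat ->
  (* js = j* = max { i : lam > sum_{j<i} mu_j } (0-based) *)
  (js < l)%nat -> Smu mu js < lam ->
  (forall i, (i < l)%nat -> Smu mu i < lam -> (i <= js)%nat) ->
  (* case lam > sum of all mu *)
  (Smu mu l < lam ->
     (exists r x, steady_state l lam c mu w (Qbar l c mu w) r x) /\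
     (forall Q r x, steady_state l lam c mu w Q r x ->
        Q = Qbar l c mu w /\
        (forall i, (i < l)%nat -> x i = mu i) /\
        (0 < r -> joiner_payoff l c mu w Q r x = 0))) /\
  (* case lam <= sum of all mu *)
  (lam <= Smu mu l ->
     (exists r x, steady_state l lam c mu w (npos c mu w js) r x) /\
     (forall r x, steady_state l lam c mu w (npos c mu w js) r x ->
        (forall i, (i < js)%nat -> x i = mu i) /\
        x js = lam - Smu mu js /\
        (0 < r -> joiner_payoff l c mu w (npos c mu w js) r x = w js) /\
        (r < lam -> w js = 0)) /\
     ((forall i, (1 <= i <= l)%nat -> lam <> Smu mu i) ->
        forall Q r x, steady_state l lam c mu w Q r x -> Q = npos c mu w js)).
Proof.
  intros Hl Hlam Hc Hmu Hw Hwl Hjs Hsjs Hmax.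
  assert (Hc0 : c <> 0) by lra.
  assert (Hstep := fun k => npos_step c mu w k Hc0).
  assert (HSpos : forall k, (0 < k)%nat -> (k <= l)%nat -> 0 < Smu mu k)
    by (intros; apply psum_pos; [lia| intros; apply Hmu; lia]).
  assert (Hlt : forall i j, (i < j)%nat -> (j < l)%nat -> npos c mu w i < npos c mu w j).
  { intros i j Hij. induction j; [lia|]. intros Hj. pose proof (Hstep j).
    pose proof (Hw j (S j) ltac:(lia) Hj). pose proof (HSpos (S j) ltac:(lia) ltac:(lia)).
    assert (0 < (w j - w (S j)) * Smu mu (S j) / c)
      by (apply Rdiv_lt_0_compat; [apply Rmult_lt_0_compat; lra|lra]).
    destruct (Nat.eq_dec i j) as [->|]; [lra|].
    assert (npos c mu w i < npos c mu w j) by (apply IHj; lia). lra. }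
  assert (Hle : forall i j, (i <= j)%nat -> (j < l)%nat -> npos c mu w i <= npos c mu w j)
    by (intros i j ? ?; destruct (Nat.eq_dec i j) as [->|]; [lra| left; apply Hlt; lia]).
  assert (H0 : npos c mu w 0 = 0) by (unfold npos; simpl; field; auto).
  assert (Hwnn : forall k, (k < l)%nat -> 0 <= w k).
  { intros k Hk. destruct (Nat.eq_dec k (l-1)) as [->|]; auto.
    pose proof (Hw k (l-1)%nat ltac:(lia) ltac:(lia)). lra. }
  set (W' := fun j => if (j <? l)%nat then w j else 0).
  assert (HN : forall k, (k < l)%nat -> npos c mu W' k = npos c mu w k).
  { intros k Hk. unfold npos. f_equal. apply psum_ext. intros j Hj. unfold W'.
    destruct (Nat.ltb_spec j l), (Nat.ltb_spec k l); try lia; ring. }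
  assert (HNl : npos c mu W' l = Qbar l c mu w).
  { unfold npos, Qbar. f_equal. apply psum_ext. intros j Hj. unfold W'.
    destruct (Nat.ltb_spec j l), (Nat.ltb_spec l l); try lia; ring. }
  assert (HWk : forall k, (k < l)%nat -> W' k = w k)
    by (intros k Hk; unfold W'; destruct (Nat.ltb_spec k l); lia || auto).
  assert (HWl : W' l = 0) by (unfold W'; destruct (Nat.ltb_spec l l); lia || auto).
  assert (HQb : forall i, (i < l)%nat -> npos c mu w i <= Qbar l c mu w).
  { intros i Hi. pose proof (npos_step c mu W' (l-1) Hc0) as E.
    replace (S (l-1)) with l in E by lia. rewrite HNl, HN, HWl, HWk in E by lia.
    pose proof (HSpos l Hl ltac:(lia)). pose proof (Hle i (l-1)%nat ltac:(lia) ltac:(lia)).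
    assert (0 <= (w (l - 1)%nat - 0) * Smu mu l / c)
      by (apply Rmult_le_pos; [apply Rmult_le_pos; lra| left; apply Rinv_0_lt_compat; lra]).
    lra. }
  assert (Hnn : forall i, (i < l)%nat -> 0 <= npos c mu w i)
    by (intros i Hi; rewrite <- H0; apply Hle; lia).
  assert (Hint1 : forall x, (forall i, (i < l)%nat -> x i = mu i) -> forall i, (i < l)%nat ->
     is_RInt (fun p => / speed l c mu w x p) (npos c mu w i) (Qbar l c mu w) (w i / c)).
  { intros x Hx i Hi.
    pose proof (rint_chain (fun p => / speed l c mu w x p) (npos c mu W') W'
                  (fun k => Smu mu (S k)) c l Hc0) as R.
    replace (w i / c) with ((W' i - W' l) / c) by (rewrite HWk, HWl by lia; field; auto).
    rewrite <- HN, <- HNl by lia.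
    apply R; [|lia]. clear R. intros k Hk.
    pose proof (HSpos (S k) ltac:(lia) ltac:(lia)) as HS.
    pose proof (npos_step c mu W' k Hc0) as E.
    assert (HWd : 0 <= W' k - W' (S k)).
    { rewrite (HWk k Hk). destruct (Nat.eq_dec (S k) l) as [<-|]. rewrite HWl. specialize (Hwnn k Hk). lra.
      rewrite HWk by lia. pose proof (Hw k (S k) ltac:(lia) ltac:(lia)). lra. }
    split; [lra|]. split.
    { assert (0 <= (W' k - W' (S k)) * Smu mu (S k) / c)
        by (apply Rmult_le_pos; [apply Rmult_le_pos; lra| left; apply Rinv_0_lt_compat; lra]). lra. }
    split; [exact E|]. intros p Hp. f_equal.
    rewrite (speed_const l c mu w x p (S k)) by
      (lia || (intros j Hj; rewrite (HN k Hk) in Hp; split; intros Hjp;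
        [ destruct (Nat.lt_ge_cases j (S k)) as [|hj]; [lia|];
          rewrite HN in Hp by lia; pose proof (Hle (S k) j hj Hj); lra
        | pose proof (Hle j k ltac:(lia) Hk); lra ])).
    unfold Smu. apply psum_ext. intros; apply Hx; lia. }
  assert (Hint2 : forall x, (forall i, (i < js)%nat -> x i = mu i) -> forall i, (i <= js)%nat ->
     is_RInt (fun p => / speed l c mu w x p) (npos c mu w i) (npos c mu w js) ((w i - w js) / c)).
  { intros x Hx i Hi.
    apply (rint_chain (fun p => / speed l c mu w x p) (npos c mu w) w
                  (fun k => Smu mu (S k)) c js Hc0); [|lia]. intros k Hk.
    pose proof (HSpos (S k) ltac:(lia) ltac:(lia)) as HS.
    split; [lra|]. split; [apply Hle; lia|]. split; [apply Hstep|].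
    intros p Hp. f_equal.
    rewrite (speed_const l c mu w x p (S k)) by
      (lia || (intros j Hj; split; intros Hjp;
        [ destruct (Nat.lt_ge_cases j (S k)) as [|hj]; [lia|];
          pose proof (Hle (S k) j hj Hj); lra
        | pose proof (Hle j k ltac:(lia) ltac:(lia)); lra ])).
    unfold Smu. apply psum_ext. intros; apply Hx; lia. }
  split.
  -
    intros Hbig. pose proof (HSpos l Hl ltac:(lia)) as HSl. split.
    + exists (Smu mu l), mu. unfold steady_state.
      split; [pose proof (HQb 0%nat Hl); lra|].
      split; [lra|]. split; [intros; lra|]. split; [intros; lra|].
      split; [|reflexivity].
      intros i Hi. pose proof (HQb i Hi). pose proof (Hmu i Hi).
      split; [auto|]. split; [intros; lra|]. intros; lra.
    + intros Q r x HS. pose proof (ss_bounds _ _ _ _ _ _ _ _ HS Hmu) as Hb.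
      destruct HS as (HQ0 & Hr & HQlt & HQgt & Hx & Hrx).
      assert (Hsum : psum l x <= Smu mu l) by (apply psum_le; intros; apply Hb; auto).
      assert (HQ : Q = Qbar l c mu w).
      { destruct (Rtotal_order Q (Qbar l c mu w)) as [h|[h|h]]; auto.
        - apply HQlt in h. lra.
        - pose proof (HQgt h).
          assert (psum l x = Smu mu l).
          { apply psum_ext. intros i Hi. apply (Hx i Hi). pose proof (HQb i Hi). lra. }
          lra. }
      subst Q.
      assert (Hxmu : forall i, (i < l)%nat -> x i = mu i).
      { intros i Hi. destruct (Hx i Hi) as (H1 & H2 & H3).
        destruct (Rle_lt_or_eq_dec _ _ (HQb i Hi)) as [h|h]; [auto|].
        destruct (H3 h) as [[hx1 hx2] H4].
        destruct (Rle_lt_or_eq_dec _ _ hx2) as [h'|h']; auto. apply H4 in h'. lra. }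
      split; [reflexivity|]. split; [auto|]. intros Hrpos.
      unfold joiner_payoff. rewrite <- (psum_zero l). apply psum_ext. intros i Hi.
      unfold travel_time. rewrite (is_RInt_unique _ _ _ _ (Hint1 x Hxmu i Hi)).
      field. lra.
  -
    intros Hsmall.
    assert (Hjs1 : lam <= Smu mu (S js)).
    { destruct (Nat.eq_dec (S js) l) as [->|]; auto.
      destruct (Rle_or_lt lam (Smu mu (S js))) as [|h]; auto.
      apply Hmax in h; lia. }
    assert (HSjs : Smu mu (S js) = Smu mu js + mu js) by reflexivity.
    assert (Hcut : forall y, (forall j, (js < j)%nat -> (j < l)%nat -> y j = 0) ->
               psum l y = Smu y js + y js).
    { intros y Hy. change (Smu y js + y js) with (psum (S js) y).
      rewrite <- (psum_if l (S js) y) by lia. apply psum_ext. intros j Hj.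
      destruct (Nat.ltb_spec j (S js)); [reflexivity|]. apply Hy; lia. }
    assert (Hidx : forall i, (i < l)%nat -> npos c mu w i = npos c mu w js -> i = js).
    { intros i Hi h. destruct (Nat.lt_total i js) as [h'|[h'|h']]; auto.
      pose proof (Hlt i js h' Hjs); lra. pose proof (Hlt js i h' Hi); lra. }
    split; [|split].
    + set (xs := fun j => if (j <? js)%nat then mu j
                          else if (j =? js)%nat then lam - Smu mu js else 0).
      exists lam, xs. unfold steady_state.
      split; [apply Hnn; auto|].
      split; [lra|]. split; [auto|]. split; [intros h; pose proof (HQb js Hjs); lra|].
      split.
      * intros i Hi. split; [|split].
        -- intros h. assert (i < js)%nat.
           { destruct (Nat.lt_ge_cases i js); auto. pose proof (Hle js i ltac:(lia) Hi); lra. }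
           unfold xs. destruct (Nat.ltb_spec i js); lia || auto.
        -- intros h. assert (js < i)%nat.
           { destruct (Nat.lt_ge_cases js i); auto. pose proof (Hle i js ltac:(lia) Hjs); lra. }
           unfold xs. destruct (Nat.ltb_spec i js), (Nat.eqb_spec i js); lia || auto.
        -- intros h. apply Hidx in h; auto. subst i. unfold xs.
           destruct (Nat.ltb_spec js js), (Nat.eqb_spec js js); try lia.
           split; [lra|auto].
      * rewrite Hcut.
        -- unfold xs at 2. destruct (Nat.ltb_spec js js), (Nat.eqb_spec js js); try lia.
           unfold Smu. rewrite (psum_ext js xs mu). fold (Smu mu js). ring.
           intros j Hj. unfold xs. destruct (Nat.ltb_spec j js); lia || auto.
        -- intros j h1 h2. unfold xs. destruct (Nat.ltb_spec j js), (Nat.eqb_spec j js); lia || auto.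
    + intros r x HS. pose proof (ss_bounds _ _ _ _ _ _ _ _ HS Hmu) as Hb.
      destruct HS as (HQ0 & Hr & HQlt & HQgt & Hx & Hrx).
      assert (Hxlt : forall i, (i < js)%nat -> x i = mu i)
        by (intros i Hi; apply (Hx i ltac:(lia)); apply Hlt; lia).
      assert (Hxgt : forall i, (js < i)%nat -> (i < l)%nat -> x i = 0)
        by (intros i Hi Hi'; apply (Hx i Hi'); apply Hlt; lia).
      assert (Hsum : psum l x = Smu mu js + x js).
      { rewrite Hcut by auto. unfold Smu. rewrite (psum_ext js x mu); auto. }
      assert (Hrl : r = lam).
      { destruct (Rle_lt_or_eq_dec _ _ (HQb js Hjs)) as [h|h]; [auto|].
        destruct (Hx js Hjs) as (_ & _ & H3). destruct (H3 eq_refl) as [[h1 h2] H4].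
        destruct (Rle_lt_or_eq_dec _ _ h2) as [h'|h']; auto. lra. }
      split; [auto|]. split; [lra|]. split; [|intros; lra].
      intros Hrpos. unfold joiner_payoff.
      rewrite (psum_ext l _ (fun i => x i * (w js / r))).
      { rewrite psum_mulr. rewrite <- Hrx. field. lra. }
      intros i Hi. destruct (Nat.le_gt_cases i js) as [h|h].
      * unfold travel_time. rewrite (is_RInt_unique _ _ _ _ (Hint2 x Hxlt i h)). field. lra.
      * rewrite (Hxgt i h Hi). field. lra.
    + intros Hne Q r x HS. pose proof (ss_bounds _ _ _ _ _ _ _ _ HS Hmu) as Hb.
      destruct HS as (HQ0 & Hr & HQlt & HQgt & Hx & Hrx).
      assert (Hjs2 : lam < Smu mu (S js)).
      { pose proof (Hne (S js) ltac:(lia)). lra. }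
      destruct (Rtotal_order Q (npos c mu w js)) as [h|[h|h]]; auto; exfalso.
      * pose proof (HQb js Hjs). assert (r = lam) by (apply HQlt; lra).
        assert (psum l x <= psum l (fun j => if (j <? js)%nat then mu j else 0)).
        { apply psum_le. intros j Hj. destruct (Nat.ltb_spec j js). apply Hb; auto.
          right. apply (Hx j Hj). pose proof (Hle js j ltac:(lia) Hj). lra. }
        rewrite psum_if in H2 by lia. fold (Smu mu js) in H2. lra.
      * assert (psum l (fun j => if (j <? S js)%nat then mu j else 0) <= psum l x).
        { apply psum_le. intros j Hj. destruct (Nat.ltb_spec j (S js)).
          right. symmetry. apply (Hx j Hj). pose proof (Hle j js ltac:(lia) Hjs). lra.
          apply Hb; auto. }
        rewrite psum_if in H by lia. fold (Smu mu (S js)) in H. lra.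
Qed.
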